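(* Fix positive integers $m$ and $\ell$. A rational number $\beta$ is of the form $\gamma^{\ell}$ for some $\gamma\in\mathbb{Q}(\zeta_{m\ell})$ if and only if one of the following sets of conditions is satisfied: (i) $\ell\equiv 1\pmod{2}$ and $\beta=c^{\ell}$ for some $c\in\mathbb{Q}$; (ii) $\ell\equiv 0\pmod{2}$, $\beta>0$, and $\beta=c^{\ell/2}$ for some $c\in\mathbb{Q}$ with $\sqrt{c}\in\mathbb{Q}(\zeta_{m\ell})$; (iii) $\ell\equiv 0\pmod{2}$, $\beta<0$, $2\mid m$, and $\beta=-c^{\ell/2}$ for some $c\in\mathbb{Q}$ with $\sqrt{c}\in\mathbb{Q}(\zeta_{m\ell})$; (iv) $\ell\equiv 2\pmod{4}$, $\beta<0$, $2\nmid m$, and $\beta=c^{\ell/2}$ for some $c\in\mathbb{Q}$ with $\sqrt{c}\in\mathbb{Q}(\zeta_{m\ell})$; (v) $\ell\equiv 4\pmod{8}$, $\beta<0$, $2\nmid m$, and $\beta=-(2c)^{\ell/2}$ for some $c\in\mathbb{Q}$ with $\sqrt{c}\in\mathbb{Q}(\zeta_{m\ell})$.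
   Context: $\zeta_n$ denotes a primitive $n$th root of unity in $\mathbb{C}$. *)

(* Defs.v *)
From mathcomp Require Import all_boot all_order all_algebra all_field.
Set Implicit Arguments. Unset Strict Implicit. Unset Printing Implicit Defensive.
Import Order.TTheory GRing.Theory Num.Theory.
Local Open Scope ring_scope.

(* Elements of algC (algebraic complex numbers) lying in the cyclotomic field
   Q(zeta_n): x = p(z) for some rational polynomial p, where z is a primitive
   n-th root of unity (all primitive n-th roots generate the same field, and
   Q(z) = Q[z] since z is algebraic). *)
Definition in_cyclo (n : nat) (x : algC) : Prop :=
  exists z : algC, n.-primitive_root z /\
    exists p : {poly rat}, x = (map_poly (@ratr algC) p).[z].

Definition sqrt_in_cyclo (n : nat) (c : rat) : Prop :=
  exists s : algC, s ^+ 2 = ratr c /\ in_cyclo n s.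

(* Main.v *)
Require Import Defs.
From mathcomp Require Import all_boot all_order all_algebra all_field.
From mathcomp Require Import zify ring lra.
Import Order.TTheory GRing.Theory Num.Theory.
Local Open Scope ring_scope.

Local Notation pQtoC := (map_poly (@ratr algC)).

Definition Kz (z x : algC) := exists p : {poly rat}, x = (pQtoC p).[z].

Lemma ratrC_inj : injective (@ratr algC).
Proof. exact: (fmorph_inj (@ratr algC)). Qed.

Lemma Kz_rat z c : Kz z (ratr c).
Proof. by exists c%:P; rewrite map_polyC hornerC. Qed.

Lemma Kz_X z : Kz z z.
Proof. by exists 'X; rewrite map_polyX hornerX. Qed.

Lemma Kz_add z x y : Kz z x -> Kz z y -> Kz z (x + y).
Proof. by move=> [p ->] [q ->]; exists (p + q); rewrite rmorphD hornerD. Qed.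

Lemma Kz_mul z x y : Kz z x -> Kz z y -> Kz z (x * y).
Proof. by move=> [p ->] [q ->]; exists (p * q); rewrite rmorphM hornerM. Qed.

Lemma Kz_opp z x : Kz z x -> Kz z (- x).
Proof. by move=> [p ->]; exists (- p); rewrite rmorphN hornerN. Qed.

Lemma Kz_exp z x n : Kz z x -> Kz z (x ^+ n).
Proof.
move=> Hx; elim: n => [|n IH]; first by rewrite expr0 -(rmorph1 (@ratr algC)); apply: Kz_rat.
by rewrite exprS; apply: Kz_mul.
Qed.

Lemma Kz_aut (u : {rmorphism algC -> algC}) p y :
  u ((pQtoC p).[y]) = (pQtoC p).[u y].
Proof.
rewrite -horner_map -map_poly_comp; congr (_.[_]).
by apply: eq_map_poly => b /=; rewrite fmorph_rat.
Qed.

Lemma prim_half n (x : algC) : n.-primitive_root x -> ~~ odd n -> x ^+ (n %/ 2) = -1.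
Proof.
move=> px ev.
have n0 := prim_order_gt0 px.
have E : (n %/ 2 * 2 = n)%N by rewrite divnK // dvdn2.
have : (x ^+ (n %/ 2)) ^+ 2 == 1 by rewrite -exprM E prim_expr_order.
rewrite sqrf_eq1 => /orP[|/eqP //].
rewrite -(prim_order_dvd px) => /dvdn_leq.
have h0 : (0 < n %/ 2)%N.
  rewrite divn_gt0 //; move: ev n0; clear; case: n => [|[|n]] //.
move/(_ h0) => H; exfalso; move: H; rewrite -{1}E; lia.
Qed.

Lemma fix_rat N (z : algC) (p : {poly rat}) : N.-primitive_root z ->
  (forall k, (k < N)%N -> coprime k N -> (pQtoC p).[z ^+ k] = (pQtoC p).[z]) ->
  exists c, (pQtoC p).[z] = ratr c.
Proof.
move=> pz Hfix.
have N0 := prim_order_gt0 pz.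
have [q [Dq monq] _] := minCpolyP z.
have Dc : pQtoC q = cyclotomic z N by rewrite -Dq (minCpoly_cyclotomic pz).
set d := (pQtoC p).[z].
set r := p %% q.
pose rs := [seq z ^+ (nat_of_ord k) | k : 'I_N <- [seq k : 'I_N <- index_enum 'I_N | coprime k N]].
have Hc : cyclotomic z N = \prod_(w <- rs) ('X - w%:P).
  by rewrite /cyclotomic big_map big_filter.
have Hroot : forall k, (k < N)%N -> coprime k N -> (pQtoC r).[z ^+ k] = d.
  move=> k kN ck; rewrite /d -(Hfix k kN ck) [in RHS](divp_eq p q) rmorphD rmorphM /=.
  rewrite hornerD hornerM Dc.
  have -> : (cyclotomic z N).[z ^+ k] = 0.
    by apply/eqP; rewrite -/(root _ _) root_cyclotomic // prim_root_exp_coprime.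
  by rewrite mulr0 add0r.
pose Q := pQtoC r - d%:P.
have szq : size q = (size rs).+1.
  by rewrite -(size_map_poly (@ratr algC)) Dc Hc size_prod_XsubC.
have szr : (size r < size q)%N by rewrite ltn_modpN0 // monic_neq0.
have rs0 : (0 < size rs)%N.
  have := size_cyclotomic z N; rewrite Hc size_prod_XsubC => [[->]].
  by rewrite totient_gt0.
have HQ : Q = 0.
  apply/eqP; apply: contraT => Q0.
  have Hall : all (root Q) rs.
    apply/allP => w /mapP [k]; rewrite mem_filter => /andP [ck _] ->.
    by rewrite /root /Q hornerD hornerN hornerC Hroot // subrr.
  have Hu : uniq rs.
    rewrite map_inj_in_uniq ?filter_uniq ?index_enum_uniq //.
    move=> i j _ _ /eqP; rewrite (eq_prim_root_expr pz) !modn_small //.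
    by move/eqP => E; apply: val_inj.
  have H := max_poly_roots Q0 Hall Hu.
  have := size_polyD (pQtoC r) (- d%:P).
  rewrite size_polyN size_map_poly => H2.
  have H3 := leq_trans H H2.
  rewrite size_polyC in H3.
  move: H3 szr rs0; rewrite szq; case: (d != 0) => /=;
  rewrite leq_max ltnS => /orP [h1|h1] h2 h3.
  - by have := leq_trans h1 h2; rewrite ltnn.
  - by move: h1 h3; case: (size rs).
  - by have := leq_trans h1 h2; rewrite ltnn.
  - by [].
exists r`_0.
have : (pQtoC r)`_0 = (d%:P)`_0 by rewrite -[pQtoC r](subrK d%:P) -/Q HQ add0r.
by rewrite coef_map coefC /= => ->.
Qed.

Lemma aut_root l (w g : algC) (b : rat) (u : {rmorphism algC -> algC}) :
  l.-primitive_root w -> g ^+ l = ratr b -> g != 0 ->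
  exists j : nat, u g = w ^+ j * g.
Proof.
move=> pw Hg g0.
have : (u g / g) ^+ l = 1.
  by rewrite expr_div_n -rmorphXn /= Hg fmorph_rat -Hg divff // expf_neq0.
case/(prim_rootP pw) => j Hj; exists j.
by rewrite -Hj divfK.
Qed.

Lemma commute_Kz N z (u v : {rmorphism algC -> algC}) x :
  N.-primitive_root z -> Kz z x -> u (v x) = v (u x).
Proof.
move=> pz [p ->]; rewrite !Kz_aut.
by rewrite (aut_unity_rootC u v (prim_order_gt0 pz) (prim_expr_order pz)).
Qed.

Lemma g_neq0 l (g : algC) b : (0 < l)%N -> g ^+ l = ratr b -> b != 0 -> g != 0.
Proof.
move=> l0 Hg b0; apply/eqP => g0; move: Hg; rewrite g0 expr0n.
case: l l0 => // l _ /= /esym /eqP; rewrite fmorph_eq0 => /eqP E.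
by move: b0; rewrite E eqxx.
Qed.

Lemma prim_w m l (z : algC) : (0 < m)%N -> (m * l).-primitive_root z ->
  l.-primitive_root (z ^+ m).
Proof.
move=> m0 pz; have := dvdn_prim_root pz (dvdn_mull m (dvdnn l)).
rewrite mulnK //; move: (prim_order_gt0 pz); rewrite muln_gt0 => /andP[] //.
Qed.

Lemma core m l (z g : algC) b : (0 < m)%N -> (0 < l)%N ->
  (m * l).-primitive_root z -> Kz z g -> g ^+ l = ratr b -> b != 0 ->
  exists a : nat, forall (u : {rmorphism algC -> algC}) j,
    u g = (z ^+ m) ^+ j * g ->
    u (z ^+ m) ^+ a * (z ^+ m) ^+ (2 * j) = (z ^+ m) ^+ a.
Proof.
move=> m0 l0 pz Kg Hg b0.
have pw := @prim_w m l z m0 pz.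
have g0 := @g_neq0 l g b l0 Hg b0.
set N := (m * l)%N in pz.
set w := z ^+ m in pw *.
have N0 : (0 < N)%N by rewrite muln_gt0 m0.
have cN : coprime N.-1 N by rewrite -{2}(prednK N0) coprimenS.
have [s Hs] := Qn_aut_exists cN.
have wN : w ^+ N = 1 by rewrite /w -exprM mulnC exprM (prim_expr_order pz) expr1n.
have sw : s w * w = 1 by rewrite Hs // -exprSr prednK.
have [a Ha] := @aut_root l w g b s pw Hg g0.
exists a => u j Hj.
have C := @commute_Kz _ z u s g pz Kg.
rewrite Ha Hj !rmorphM (rmorphXn u a w) (rmorphXn s j w) /= Hj Ha in C.
apply: (mulIf g0).
rewrite mul2n -addnn exprD -!mulrA mulrCA C mulrA -exprMn_comm; last exact: mulrC.
by rewrite [w * _]mulrC sw expr1n mul1r.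
Qed.

Lemma fixmu m l (z g : algC) b a mu kappa : (0 < m)%N -> (0 < l)%N ->
  (m * l).-primitive_root z -> Kz z g -> g ^+ l = ratr b -> b != 0 ->
  (forall (u : {rmorphism algC -> algC}) j,
    u g = (z ^+ m) ^+ j * g ->
    u (z ^+ m) ^+ a * (z ^+ m) ^+ (2 * j) = (z ^+ m) ^+ a) ->
  Kz z mu -> mu ^+ 2 = (z ^+ m) ^+ a * ratr kappa ->
  exists c, (g * mu) ^+ 2 = ratr c.
Proof.
move=> m0 l0 pz Kg Hg b0 Ha Kmu Hmu.
have pw := @prim_w m l z m0 pz.
have g0 := @g_neq0 l g b l0 Hg b0.
have [pd Dd] : Kz z ((g * mu) ^+ 2) by apply: Kz_exp; apply: Kz_mul.
rewrite Dd; apply: (@fix_rat _ z pd pz) => k kN ck.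
have [u Hu] := Qn_aut_exists ck.
rewrite -(Hu z (prim_expr_order pz)) -Kz_aut -Dd.
have [j Hj] := @aut_root l _ g b u pw Hg g0.
rewrite rmorphXn rmorphM /= Hj !exprMn -rmorphXn Hmu rmorphM rmorphXn fmorph_rat /=.
rewrite -(Ha u j Hj); set w := z ^+ m.
rewrite -[(w ^+ j) ^+ 2]exprM [(j * 2)%N]mulnC.
set X := w ^+ (2 * j); set Y := u w ^+ a.
ring.
Qed.

Definition RHS (m l : nat) (beta : rat) : Prop :=
  (odd l /\ exists c : rat, beta = c ^+ l) \/
      (~~ odd l /\ 0 < beta /\
         exists c : rat, beta = c ^+ (l %/ 2) /\ sqrt_in_cyclo (m * l) c) \/
      (~~ odd l /\ beta < 0 /\ (2 %| m)%N /\
         exists c : rat, beta = - c ^+ (l %/ 2) /\ sqrt_in_cyclo (m * l) c) \/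
      ((l %% 4 = 2)%N /\ beta < 0 /\ ~~ (2 %| m)%N /\
         (exists c : rat, beta = c ^+ (l %/ 2) /\ sqrt_in_cyclo (m * l) c)) \/
      ((l %% 8 = 4)%N /\ beta < 0 /\ ~~ (2 %| m)%N /\
         (exists c : rat, beta = - (2 * c) ^+ (l %/ 2) /\ sqrt_in_cyclo (m * l) c)).

Lemma sqrt_in N z c s : N.-primitive_root z -> Kz z s -> s ^+ 2 = ratr c ->
  sqrt_in_cyclo N c.
Proof. by move=> pz Ks Hs; exists s; split => //; exists z; split. Qed.

Lemma quarter N (z : algC) : N.-primitive_root z -> (4 %| N)%N ->
  (z ^+ (N %/ 4)) ^+ 2 = -1.
Proof.
move=> pz /dvdnP [k Nk]; rewrite Nk in pz *.
rewrite mulnK // -exprM.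
have -> : (k * 2 = k * 4 %/ 2)%N by rewrite -(mulnK (k * 2) (isT : (0 < 2)%N)) -mulnA.
by apply: prim_half => //; rewrite oddM andbF.
Qed.

Lemma even_case m l (z s : algC) beta c : (0 < m)%N -> (0 < l)%N ->
  (m * l).-primitive_root z -> ~~ odd l -> beta != 0 ->
  s ^+ 2 = ratr c -> Kz z s -> beta = c ^+ (l %/ 2) -> RHS m l beta.
Proof.
move=> m0 l0 pz ev b0 Hs Ks Hb.
have [bneg|bpos|bz] := ltgtP beta 0; last by move: b0; rewrite bz eqxx.
- have oh : odd (l %/ 2).
    apply: contraLR bneg => oh; rewrite -leNgt Hb; exact: exprn_even_ge0.
  have [m2|m2] := boolP (2 %| m)%N.
  + right; right; left; split => //; split => //; split => //.
    exists (- c); split.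
      by rewrite Hb exprNn -signr_odd oh expr1 mulN1r opprK.
    apply: (@sqrt_in _ z _ (z ^+ ((m * l) %/ 4) * s) pz).
      by apply: Kz_mul => //; apply: Kz_exp; apply: Kz_X.
    rewrite exprMn quarter // ?Hs ?rmorphN ?mulN1r //.
    by rewrite (_ : 4 = 2 * 2)%N // dvdn_mul // dvdn2.
  + right; right; right; left; split; first by move: ev oh; clear; lia.
    split => //; split => //; exists c; split => //.
    exact: (@sqrt_in _ z c s pz Ks Hs).
- right; left; split => //; split => //; exists c; split => //.
  exact: (@sqrt_in _ z c s pz Ks Hs).
Qed.

Lemma wpow m l (z : algC) : (m * l).-primitive_root z -> (z ^+ m) ^+ l = 1.
Proof. by move=> pz; rewrite -exprM prim_expr_order. Qed.

Lemma Kz_w z m : Kz z (z ^+ m).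
Proof. by apply: Kz_exp; apply: Kz_X. Qed.

Lemma from_gp m l (z gp : algC) beta c : (0 < m)%N -> (0 < l)%N ->
  (m * l).-primitive_root z -> beta != 0 -> Kz z gp ->
  gp ^+ l = ratr beta -> gp ^+ 2 = ratr c -> RHS m l beta.
Proof.
move=> m0 l0 pz b0 Kgp Hl Hc.
have gp0 := @g_neq0 l gp beta l0 Hl b0.
have [ol|el] := boolP (odd l).
- left; split => //; exists (beta / c ^+ (l.-1 %/ 2)).
  apply: ratrC_inj; rewrite rmorphXn fmorph_div rmorphXn /= -Hc -exprM.
  have E1 : (2 * (l.-1 %/ 2) = l.-1)%N.
    by rewrite mulnC divnK // dvdn2; move: ol l0; clear; case: l.
  have Gp : ratr beta / gp ^+ l.-1 = gp.
    by rewrite -Hl -{1}(prednK l0) exprS mulfK ?expf_neq0.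
  by rewrite E1 Gp Hl.
- apply: (@even_case m l z gp beta c) => //.
  apply: ratrC_inj; transitivity ((ratr c : algC) ^+ (l %/ 2)); last by rewrite rmorphXn.
  rewrite -Hc -exprM -Hl; congr (_ ^+ _).
  by rewrite mulnC divnK // dvdn2.
Qed.

Lemma arith8 t j : (0 < t)%N -> odd j -> ((2 * j) %% (t * 8) = (t * 4) %% (t * 8))%N -> False.
Proof.
move=> t0 oj E.
rewrite (modn_small (_ : t * 4 < t * 8)%N) in E; last by lia.
have D := divn_eq (2 * j) (t * 8).
rewrite E in D.
move: D; set q := (_ %/ _)%N; rewrite mulnA; move: (q * t)%N => X.
lia.
Qed.

Lemma no8 m l (z g : algC) beta a : (0 < m)%N -> (0 < l)%N ->
  (m * l).-primitive_root z -> Kz z g -> g ^+ l = ratr beta -> beta != 0 ->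
  (forall (u : {rmorphism algC -> algC}) j,
    u g = (z ^+ m) ^+ j * g ->
    u (z ^+ m) ^+ a * (z ^+ m) ^+ (2 * j) = (z ^+ m) ^+ a) ->
  odd a -> odd m -> (8 %| l)%N -> False.
Proof.
move=> m0 l0 pz [pg Dg] Hg b0 Ha oa om /dvdnP [t lt].
have pw := @prim_w m l z m0 pz.
have g0 := @g_neq0 l g beta l0 Hg b0.
have t0 : (0 < t)%N by move: l0; rewrite lt muln_gt0 => /andP[].
have EN : (m * l = 2 * (m * (t * 4)))%N by rewrite lt; lia.
have ck : coprime (m * (t * 4)).+1 (m * l).
  by rewrite EN coprimeMr coprimeSn andbT coprimen2 /= !oddM /= !andbF.
have [u Hu] := Qn_aut_exists ck.
have zH : z ^+ (m * (t * 4)) = -1.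
  have := @prim_half _ _ pz; rewrite EN mulKn // => H; rewrite H //.
  by rewrite oddM.
have uz : u z = - z by rewrite Hu ?(prim_expr_order pz) // exprS zH mulrN1.
set w := z ^+ m in pw Ha *.
have uw : u w = - w.
  by rewrite /w rmorphXn uz exprNn -signr_odd om expr1 mulN1r.
have w0 : w != 0 by rewrite (prim_root_eq0 pw) -lt0n.
have [j Hj] := @aut_root l w g beta u pw Hg g0.
have H1 := Ha u j Hj.
rewrite uw exprNn -signr_odd oa expr1 mulN1r mulNr in H1.
have w2j : w ^+ (2 * j) = -1.
  by apply: (mulfI (expf_neq0 a w0)); rewrite mulrN1 -{2}H1 opprK.
have uu : u (u g) = g by rewrite Dg !Kz_aut uz rmorphN uz opprK.
have uu2 : u (u g) = (-1) ^+ j * w ^+ (2 * j) * g.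
  by rewrite Hj rmorphM (rmorphXn u j w) uw Hj (exprNn w j) mul2n -addnn exprD !mulrA.
rewrite w2j uu in uu2.
have sj : (-1) ^+ j = -1 :> algC.
  move: uu2 => /esym; rewrite -{2}[g]mul1r => /(mulIf g0); rewrite mulrN1.
  by move=> /(congr1 (fun x => - x)); rewrite opprK.
have oj : odd j.
  move: sj; rewrite -signr_odd; case: (odd j) => //= E.
  rewrite expr0 in E; have := @ltr01 algC; rewrite {1}E oppr_gt0 ltr10 //.
have hw : w ^+ (t * 4) = -1.
  have := @prim_half _ _ pw; rewrite lt (_ : t * 8 %/ 2 = t * 4)%N; last first.
    by rewrite (_ : t * 8 = t * 4 * 2)%N ?mulnK // -mulnA.
  by move=> H; apply: H; rewrite oddM /= andbF.
have := eqxx (-1 : algC); rewrite -{1}w2j -hw (eq_prim_root_expr pw) lt => /eqP.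
exact: arith8.
Qed.

Lemma forward m l beta : (0 < m)%N -> (0 < l)%N -> beta != 0 ->
  (exists gamma : algC, in_cyclo (m * l) gamma /\ gamma ^+ l = ratr beta) ->
  RHS m l beta.
Proof.
move=> m0 l0 b0 [g [[z [pz [pg Dg]]] Hg]].
have Kg : Kz z g by exists pg.
have [a Ha] := @core m l z g beta m0 l0 pz Kg Hg b0.
have pw := @prim_w m l z m0 pz.
have g0 := @g_neq0 l g beta l0 Hg b0.
have wl := @wpow m l z pz.
have FM := fun mu kappa => @fixmu m l z g beta a mu kappa m0 l0 pz Kg Hg b0 Ha.
have Gen : forall h kappa, (z ^+ m) ^+ (2 * h) = (z ^+ m) ^+ a * ratr kappa ->
    RHS m l beta.
  move=> h kappa Hh.
  have Hmu : ((z ^+ m) ^+ h) ^+ 2 = (z ^+ m) ^+ a * ratr kappa.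
    by rewrite -exprM mulnC.
  have [c Hc] := FM ((z ^+ m) ^+ h) kappa (@Kz_exp z _ h (Kz_w z m)) Hmu.
  apply: (@from_gp m l z (g * (z ^+ m) ^+ h) beta c) => //.
    by apply: Kz_mul => //; apply: Kz_exp; apply: Kz_w.
  by rewrite exprMn; set w := z ^+ m; rewrite exprAC wl expr1n mulr1.
have [ol|el] := boolP (odd l).
  apply: (Gen ((a * l.+1) %/ 2)%N 1); rewrite rmorph1 mulr1.
  rewrite mulnC divnK; last by rewrite dvdn_mull // dvdn2 /= ol.
  by rewrite mulnS exprD mulnC exprM wl expr1n mulr1.
have [oa|ea] := boolP (odd a); last first.
  apply: (Gen (a %/ 2)%N 1); rewrite rmorph1 mulr1.
  by rewrite mulnC divnK // dvdn2.
have hl := @prim_half l _ pw el.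
have [l2|l4] := boolP (l %% 4 == 2)%N.
  apply: (Gen ((a + l %/ 2) %/ 2)%N (-1)); rewrite rmorphN rmorph1 mulrN1.
  rewrite mulnC divnK; last by rewrite dvdn2 oddD oa /=; move: el l2; clear; lia.
  by rewrite exprD hl mulrN1.
have l4d : (4 %| l)%N by move: el l4; clear; rewrite /dvdn; lia.
have el2 : ~~ odd (l %/ 2) by move: el l4; clear; lia.
have [m2|m2] := boolP (2 %| m)%N.
  set xi := z ^+ (m %/ 2).
  have xi2 : xi ^+ 2 = z ^+ m by rewrite -exprM divnK.
  have xil : xi ^+ l = -1.
    rewrite -exprM; have := @prim_half _ _ pz.
    rewrite (_ : (m * l) %/ 2 = m %/ 2 * l)%N; last by rewrite divn_mulAC.
    by move=> H; apply: H; rewrite oddM (negPf el) andbF.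
  have Hmu : (xi ^+ a) ^+ 2 = (z ^+ m) ^+ a * ratr 1.
    by rewrite rmorph1 mulr1 exprAC xi2.
  have [c Hc] := FM (xi ^+ a) 1 (@Kz_exp z _ a (Kz_w z _)) Hmu.
  have Hgl : (g * xi ^+ a) ^+ l = - ratr beta.
    by rewrite exprMn exprAC xil -signr_odd oa expr1 mulrN1 Hg.
  have Eb : beta = - c ^+ (l %/ 2).
    apply: ratrC_inj; rewrite rmorphN; transitivity (- (ratr c : algC) ^+ (l %/ 2)); last by rewrite rmorphXn.
    rewrite -Hc -exprM mulnC divnK ?dvdn2 // Hgl opprK //.
  right; right; left; split => //; split.
    rewrite Eb oppr_lt0 lt_def exprn_even_ge0 // andbT.
    by apply: contra b0 => /eqP E; rewrite Eb E oppr0.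
  split => //; exists c; split => //.
  apply: (@sqrt_in _ z c (g * xi ^+ a) pz) => //.
  by apply: Kz_mul => //; apply: Kz_exp; apply: Kz_w.
have om : odd m by move: m2; rewrite dvdn2 negbK.
have l8 : (l %% 8 = 4)%N.
  have n8 : ~~ (8 %| l)%N.
    by apply/negP => H; exact: (@no8 m l z g beta a m0 l0 pz Kg Hg b0 Ha oa om H).
  by move: l4d n8; clear; rewrite /dvdn; lia.
set t := (l %/ 4)%N.
have lt : l = (t * 4)%N by rewrite divnK.
have ot : odd t by move: l8; rewrite /t; clear; lia.
have l2t : (l %/ 2 = t * 2)%N by rewrite lt; clear; lia.
set w := z ^+ m in hl Ha FM Gen wl pw *.
set i := w ^+ t.
have i2 : i ^+ 2 = -1 by rewrite -exprM -l2t.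
have Ki : Kz z i by apply: Kz_exp; apply: Kz_w.
set h := ((a + t) %/ 2)%N.
have h2 : (2 * h = a + t)%N by rewrite mulnC divnK // dvdn2 oddD oa ot.
set mu := w ^+ h * (1 - i).
have Kmu : Kz z mu.
  apply: Kz_mul; first by apply: Kz_exp; apply: Kz_w.
  apply: Kz_add; last exact: Kz_opp.
  by rewrite -(rmorph1 (@ratr algC)); apply: Kz_rat.
have I3 : i * (1 - i) ^+ 2 = 2.
  have -> : i * (1 - i) ^+ 2 = i * (1 + i ^+ 2) - 2 * i ^+ 2 by ring.
  by rewrite i2; ring.
have Hmu : mu ^+ 2 = w ^+ a * ratr 2.
  rewrite rmorph_nat exprMn -exprM mulnC h2 exprD -mulrA I3 //.
have [c Hc] := FM mu 2 Kmu Hmu.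
have Hgl : (g * mu) ^+ l = ratr beta * - 2 ^+ (t * 2).
  rewrite exprMn Hg; congr (_ * _).
  rewrite (_ : l = 2 * (t * 2))%N; last by rewrite lt; clear; lia.
  rewrite exprM Hmu exprMn rmorph_nat exprAC -l2t hl -signr_odd oa expr1 mulN1r //.
have w0 : w != 0 by rewrite (prim_root_eq0 pw) -lt0n.
have two0 : (2 : algC) != 0 by rewrite pnatr_eq0.
have mu0 : mu != 0.
  apply/eqP => E; move: Hmu; rewrite E expr0n /= => /esym /eqP.
  by rewrite mulf_eq0 expf_eq0 (negPf w0) andbF /= rmorph_nat (negPf two0).
have Eb : beta = - (2 * (c / 4)) ^+ (l %/ 2).
  apply: ratrC_inj; transitivity (- ((ratr c : algC) / 2) ^+ (t * 2)).
    rewrite -Hc expr_div_n -exprM (_ : 2 * (t * 2) = l)%N; last by rewrite lt; clear; lia.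
    by rewrite Hgl mulrN mulNr opprK mulfK // expf_neq0.
  rewrite rmorphN rmorphXn l2t; congr (- _ ^+ _).
  rewrite rmorphM fmorph_div !rmorph_nat.
  by field.
right; right; right; right; split => //; split.
  rewrite Eb oppr_lt0 lt_def exprn_even_ge0 // andbT.
  by apply: contra b0 => /eqP E; rewrite Eb E oppr0.
split => //; exists (c / 4); split => //.
apply: (@sqrt_in _ z (c / 4) (g * mu * ratr (2^-1)) pz).
  by apply: Kz_mul; [apply: Kz_mul | apply: Kz_rat].
rewrite exprMn Hc -rmorphXn -rmorphM; congr ratr.
Qed.

Lemma pow_sq (s : algC) c k : s ^+ 2 = ratr c -> s ^+ (2 * k) = ratr (c ^+ k).
Proof. by move=> Hs; rewrite exprM Hs rmorphXn. Qed.

Lemma backward m l beta : (0 < m)%N -> (0 < l)%N -> RHS m l beta ->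
  exists gamma : algC, in_cyclo (m * l) gamma /\ gamma ^+ l = ratr beta.
Proof.
move=> m0 l0.
have N0 : (0 < m * l)%N by rewrite muln_gt0 m0.
have EL : forall l, ~~ odd l -> l = (2 * (l %/ 2))%N.
  by move=> k ek; rewrite mulnC divnK // dvdn2.
case=> [[ol [c ->]]|[[el [_ [c [-> [s [Hs [z [pz Ks]]]]]]]]|[[el [_ [m2 [c [-> [s [Hs [z [pz Ks]]]]]]]]]|[[l4 [_ [_ [c [-> [s [Hs [z [pz Ks]]]]]]]]]|[l8 [_ [_ [c [-> [s [Hs [z [pz Ks]]]]]]]]]]]]].
- have [z pz] := C_prim_root_exists N0.
  exists (ratr c); split; last by rewrite rmorphXn.
  by exists z; split => //; apply: Kz_rat.
- exists s; split; first by exists z.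
  by rewrite {1}(EL l el) (@pow_sq _ _ _ Hs).
- set xi := z ^+ (m %/ 2).
  have xil : xi ^+ l = -1.
    rewrite -exprM; have := @prim_half _ _ pz.
    rewrite (_ : (m * l) %/ 2 = m %/ 2 * l)%N; last by rewrite divn_mulAC.
    by move=> H; apply: H; rewrite oddM (negPf el) andbF.
  exists (s * xi); split.
    exists z; split => //; apply: Kz_mul => //; apply: Kz_exp; exact: Kz_X.
  by rewrite exprMn xil mulrN1 {1}(EL l el) (@pow_sq _ _ _ Hs) rmorphN.
- have el : ~~ odd l by move: l4; clear; lia.
  exists s; split; first by exists z.
  by rewrite {1}(EL l el) (@pow_sq _ _ _ Hs).
- set t := (l %/ 4)%N.
  have lt : l = (t * 4)%N by move: l8; rewrite /t; clear; lia.
  have ot : odd t by move: l8; rewrite /t; clear; lia.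
  have l2t : (l %/ 2 = t * 2)%N by rewrite lt; clear; lia.
  set i := z ^+ ((m * l) %/ 4).
  have i2 : i ^+ 2 = -1 by apply: quarter => //; apply: dvdn_mull; rewrite lt dvdn_mull.
  exists (s * (1 + i)); split.
    exists z; split => //; apply: Kz_mul => //; apply: Kz_add.
      by rewrite -(rmorph1 (@ratr algC)); apply: Kz_rat.
    by apply: Kz_exp; exact: Kz_X.
  have E2 : (s * (1 + i)) ^+ 2 = ratr (2 * c) * i.
    rewrite rmorphM rmorph_nat exprMn Hs.
    have -> : (1 + i) ^+ 2 = 1 + i ^+ 2 + 2 * i by ring.
    by rewrite i2; ring.
  rewrite l2t (_ : l = 2 * (t * 2))%N; last by rewrite lt; clear; lia.
  rewrite exprM E2 exprMn -rmorphXn (exprM i t 2) exprAC i2 -signr_odd ot expr1 mulrN1 rmorphN.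
  by [].
Qed.

Theorem lemma3p1 (m l : nat) (beta : rat) :
  (0 < m)%N -> (0 < l)%N -> beta != 0 ->
  (exists gamma : algC, in_cyclo (m * l) gamma /\ gamma ^+ l = ratr beta) <->
  (odd l /\ exists c : rat, beta = c ^+ l) \/
      (~~ odd l /\ 0 < beta /\
         exists c : rat, beta = c ^+ (l %/ 2) /\ sqrt_in_cyclo (m * l) c) \/
      (~~ odd l /\ beta < 0 /\ (2 %| m)%N /\
         exists c : rat, beta = - c ^+ (l %/ 2) /\ sqrt_in_cyclo (m * l) c) \/
      ((l %% 4 = 2)%N /\ beta < 0 /\ ~~ (2 %| m)%N /\
         (exists c : rat, beta = c ^+ (l %/ 2) /\ sqrt_in_cyclo (m * l) c)) \/
      ((l %% 8 = 4)%N /\ beta < 0 /\ ~~ (2 %| m)%N /\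
         (exists c : rat, beta = - (2 * c) ^+ (l %/ 2) /\ sqrt_in_cyclo (m * l) c)).
Proof.
move=> m0 l0 b0; split.
- exact: forward.
- exact: backward.
Qed.
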